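(* Assume the standing setup, fix $g=g_i$ and $\ell=\ell_i$, and assume $v_N(a)$ is defined for every coefficient $a$ of the $g$-expansion of $f$. Let $p$ be a prime divisor of $N$ and $\phi$ a monic irreducible factor of $g$ in $\mathbb Z_p[x]$. Then: (1) the length of $N_\phi^-(f)$ equals the length of $N_g^-(f)$ (both equal $\ell$); (2) for every slope $-\lambda$ of $N_\phi^-(f)$ and every $\mathfrak p\in\mathcal P_{\phi,\lambda}$, one has $v_{\mathfrak p}(g(\theta))=e(\mathfrak p/p)\lambda$.
   Context: Standing setup: $f\in\mathbb Z[x]$ monic irreducible of degree $n>1$, $\theta\in\overline{\mathbb Q}$ a root, $K=\mathbb Q(\theta)$, $\mathbb Z_K$ its ring of integers. $N>1$ is an integer all of whose prime divisors are $>n$. Bar denotes reduction mod $N$, $\operatorname{red}_p$ reduction mod a prime $p$ (on $\mathbb Z[x]$ or $\mathbb Z_p[x]$). $g_1,\dots,g_m\in\mathbb Z[x]$ are monic of positive degree and $\ell_1,\dots,\ell_m$ positive integers with $f\equiv g_1^{\ell_1}\cdots g_m^{\ell_m}\pmod N$, such that for every prime $p\mid N$ the polynomials $\operatorname{red}_p(g_i)$ are squarefree and pairwise coprime in $\mathbb F_p[x]$. $N$-adic value: for $a\in\mathbb Z\setminus\{0\}$, $v_N(a)$ is defined if $a=N^kb$ with $k\ge0$, $\gcd(b,N)=1$, and then $v_N(a)=k$; $v_N(0)=\infty$. $g$-expansion $f=\sum a_i g^i$ ($\deg a_i<\deg g$), $u_i=v_N(a_i)$; $N_g(f)$ is the lower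 convex hull of the points $(i,u_i)$, $u_i<\infty$; $N_g^-(f)$ its part of negative slope; length = abscissa of the right endpoint. $p$-adic polygons: $v_p$ is the $p$-adic valuation on $\overline{\mathbb Q}_p$ with $v_p(p)=1$, extended to $\mathbb Z_p[x]$ by minimum over coefficients. For monic $\phi\in\mathbb Z_p[x]$ irreducible mod $p$, write $f=\sum b_i\phi^i$ with $\deg b_i<\deg\phi$; $N_\phi(f)$ is the lower convex hull of the points $(i,v_p(b_i))$, and $N_\phi^-(f)$ its part of negative slope. For each prime $\mathfrak p$ of $\mathbb Z_K$ above $p$, fix a topological embedding $\iota_{\mathfrak p}\colon K\hookrightarrow\overline{\mathbb Q}_p$ (for the $\mathfrak p$-adic topology), so that $v_{\mathfrak p}(\alpha)=e(\mathfrak p/p)v_p(\iota_{\mathfrak p}(\alpha))$, with $e(\mathfrak p/p)$ the ramification index. $\mathcal P_\phi=\{\mathfrak p\mid p: v_p(\phi(\iota_{\mathfrak p}(\theta)))>0\}$ and $\mathcal P_{\phi,\lambda}=\{\mathfrak p\in\mathcal P_\phi: v_p(\phi(\iota_{\mathfrak p}(\theta)))=\lambda\}$. *)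

(* Defs.v *)
From HB Require Import structures.
From mathcomp Require Import all_boot all_order all_algebra.
Set Implicit Arguments. Unset Strict Implicit. Unset Printing Implicit Defensive.
Import Order.TTheory GRing.Theory Num.Theory.
Local Open Scope ring_scope.

Definition segval (P Q : nat * rat) (x : rat) : rat :=
  if P.1 == Q.1 then P.2
  else ((Q.1%:R - x) * P.2 + (x - P.1%:R) * Q.2) / (Q.1%:R - P.1%:R).

(* (x, y) lies on the lower convex hull of pts: y is the least ordinate
   of the convex hull of pts above abscissa x (the lowest point of the
   convex hull of a finite planar set over x lies on a segment joining
   two of the points). *)
Definition on_hull (pts : seq (nat * rat)) (x y : rat) : Prop :=
  (exists P Q, [/\ P \in pts, Q \in pts, (P.1%:R <= x <= Q.1%:R)
                 & y = segval P Q x]) /\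
  (forall P Q, P \in pts -> Q \in pts -> P.1%:R <= x <= Q.1%:R ->
     y <= segval P Q x).

Definition is_slope (pts : seq (nat * rat)) (mu : rat) : Prop :=
  exists x1 x2 y1, x1 < x2 /\
    forall x, x1 <= x <= x2 -> on_hull pts x (y1 + mu * (x - x1)).

(* L is the length (abscissa of the right end point) of the part N^- of
   negative slope of the polygon: the polygon is strictly decreasing
   left of L and non-decreasing right of L. *)
Definition negpart_length (pts : seq (nat * rat)) (L : rat) : Prop :=
  (exists yL, on_hull pts L yL) /\
  (forall x1 x2 y1 y2, on_hull pts x1 y1 -> on_hull pts x2 y2 ->
     x1 < x2 -> x2 <= L -> y2 < y1) /\
  (forall x1 x2 y1 y2, on_hull pts x1 y1 -> on_hull pts x2 y2 ->
     L <= x1 -> x1 < x2 -> y1 <= y2).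

(* the points (i, u_i), i < n, with u_i < oo *)
Definition pts_of (n : nat) (u : nat -> option rat) : seq (nat * rat) :=
  pmap (fun i => omap (fun r => (i, r)) (u i)) (iota 0 n).

Definition is_expansion (R : nzRingType) (f phi : {poly R})
    (a : seq {poly R}) : Prop :=
  f = \sum_(i < size a) a`_i * phi ^+ i /\
  forall i, (i < size a)%N -> leq (size a`_i).+1 (size phi).

Definition vN_defined (N : nat) (c : int) : Prop :=
  c = 0 \/ exists k b, `|c|%N = (N ^ k * b)%N /\ coprime b N.

Fixpoint vN_rec (N fuel m : nat) : nat :=
  if fuel is f.+1 then
    if (0 < m)%N && (N %| m)%N then (vN_rec N f (m %/ N)).+1 else 0%N
  else 0%N.

(* the exponent k of the largest power N^k dividing m (for m > 0, N > 1);
   it is the k of the definition when v_N(m) is defined *)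
Definition vN (N m : nat) : nat := vN_rec N m m.

Definition vN_poly (N : nat) (a : {poly int}) : rat :=
  \big[Num.min/ (vN N `|lead_coef a|)%:R]_(c <- a | c != 0)
     (vN N `|c|)%:R.

Definition uN (N : nat) (a : seq {poly int}) (i : nat) : option rat :=
  if a`_i == 0 then None else Some (vN_poly N a`_i).

(* (Om, v, Zp) is (an isomorphic copy of) \bar Q_p with the p-adic
   valuation v_p (v(p) = 1; v is only meaningful on nonzero elements,
   v(0) = oo by convention), and Zp the ring of p-adic integers inside it:
   Zp is a subring on which v >= 0, complete for v, in which Z is dense,
   and Om is an algebraic closure of Frac(Zp) = Q_p. These axioms
   characterise (\bar Q_p, v_p, Z_p) up to isomorphism. *)
Definition vlim (Om : fieldType) (v : Om -> rat) (s : nat -> Om) (z : Om) :=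
  forall k : rat, exists n0, forall n, (n0 <= n)%N -> s n = z \/ k <= v (s n - z).

Definition vcauchy (Om : fieldType) (v : Om -> rat) (s : nat -> Om) :=
  forall k : rat, exists n0, forall m n, (n0 <= m)%N -> (n0 <= n)%N ->
    s m = s n \/ k <= v (s m - s n).

Definition padic_closure (p : nat) (Om : closedFieldType) (v : Om -> rat)
    (Zp : Om -> Prop) : Prop :=
  [/\
      (forall x y, x != 0 -> y != 0 -> v (x * y) = v x + v y),
      (forall x y, x != 0 -> y != 0 -> x + y != 0 ->
          Num.min (v x) (v y) <= v (x + y)),
      (forall n : nat, (0 < n)%N -> n%:R != 0 :> Om),
      v p%:R = 1 &
      (forall n : nat, (0 < n)%N -> coprime n p -> v n%:R = 0)] /\
  [/\
      Zp 0, Zp 1,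
      (forall x y, Zp x -> Zp y -> Zp (x - y)),
      (forall x y, Zp x -> Zp y -> Zp (x * y)) &
      (forall x, Zp x -> x != 0 -> 0 <= v x)] /\
  [/\
      (forall x k, Zp x -> exists m : int, x = m%:~R \/ k <= v (x - m%:~R)),
      (forall s, (forall n, Zp (s n)) -> vcauchy v s ->
          exists2 z, Zp z & vlim v s z) &
      (forall x, exists2 P : {poly Om}, P != 0 /\ (forall i, Zp P`_i)
                   & root P x)].

Definition in_Zpx (Om : fieldType) (Zp : Om -> Prop) (P : {poly Om}) : Prop :=
  forall i, Zp P`_i.

Definition irreducible_Zpx (Om : fieldType) (Zp : Om -> Prop) (P : {poly Om}) :=
  in_Zpx Zp P /\ ~ (size P = 1%N /\ Zp (P`_0)^-1) /\ P != 0 /\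
  forall A B, in_Zpx Zp A -> in_Zpx Zp B -> P = A * B ->
    (size A = 1%N /\ Zp (A`_0)^-1) \/ (size B = 1%N /\ Zp (B`_0)^-1).

Definition vpoly (Om : fieldType) (v : Om -> rat) (b : {poly Om}) : rat :=
  \big[Num.min/ v (lead_coef b)]_(c <- b | c != 0) v c.

Definition uP (Om : fieldType) (v : Om -> rat) (b : seq {poly Om}) (i : nat)
  : option rat :=
  if b`_i == 0 then None else Some (vpoly v b`_i).

Definition redp (q : nat) (P : {poly int}) : {poly 'F_q} :=
  map_poly (fun c : int => c%:~R) P.

Definition squarefree_poly (F : fieldType) (P : {poly F}) : Prop :=
  P != 0 /\ forall d : {poly F}, d * d %| P -> (size d <= 1)%N.

Definition toOm (Om : nzRingType) (P : {poly int}) : {poly Om} :=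
  map_poly (fun c : int => c%:~R) P.

(* Main.v *)
Require Import Defs.
From HB Require Import structures.
From mathcomp Require Import all_boot all_order all_algebra.
From mathcomp Require Import ring lra.
From Stdlib Require Import ClassicalEpsilon.
Import Order.TTheory GRing.Theory Num.Theory.
Set Implicit Arguments. Unset Strict Implicit.
Local Open Scope ring_scope.
Section Seg.
Variables (a1 a2 b1 b2 : rat).
Hypothesis ha : a1 < a2.
Let sv x := ((a2 - x) * b1 + (x - a1) * b2) / (a2 - a1).

Lemma sv_ge1 x : a1 <= x <= a2 -> b1 <= b2 -> b1 <= sv x.
Proof. move=> /andP[h1 h2] hb; rewrite /sv ler_pdivlMr ?subr_gt0 //; nra. Qed.
Lemma sv_ge2 x : a1 <= x <= a2 -> b2 <= b1 -> b2 <= sv x.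
Proof. move=> /andP[h1 h2] hb; rewrite /sv ler_pdivlMr ?subr_gt0 //; nra. Qed.
Lemma sv_ge0 x : a1 <= x <= a2 -> 0 <= b1 -> 0 <= b2 -> 0 <= sv x.
Proof. move=> /andP[h1 h2] hb1 hb2; rewrite /sv; apply: divr_ge0; last by rewrite subr_ge0 ltW. by apply: addr_ge0; apply: mulr_ge0; rewrite ?subr_ge0. Qed.
Lemma sv_incr x y : b1 <= b2 -> x <= y -> sv x <= sv y.
Proof. move=> hb hxy; rewrite /sv ler_pM2r ?invr_gt0 ?subr_gt0 //. have : 0 <= (y - x) * (b2 - b1) by rewrite mulr_ge0 ?subr_ge0. nra. Qed.
Lemma sv_decr x y : b2 < b1 -> x < y -> sv y < sv x.
Proof. move=> hb hxy; rewrite /sv ltr_pM2r ?invr_gt0 ?subr_gt0 //. have : 0 < (y - x) * (b1 - b2) by rewrite mulr_gt0 ?subr_gt0. nra. Qed.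
Lemma sv_gt2 x : b2 < b1 -> x < a2 -> b2 < sv x.
Proof. move=> hb hx; rewrite /sv ltr_pdivlMr ?subr_gt0 //; nra. Qed.
Lemma sv_L x : b1 = 0 -> 0 <= b2 -> x <= a2 -> sv x <= b2.
Proof. move=> e hb hx; rewrite /sv e ler_pdivrMr ?subr_gt0 //; nra. Qed.
Lemma sv_R x : b2 = 0 -> 0 <= b1 -> a1 <= x -> sv x <= b1.
Proof. move=> e hb hx; rewrite /sv e ler_pdivrMr ?subr_gt0 //; nra. Qed.
Lemma sv_Rs x : b2 = 0 -> 0 < b1 -> a1 < x -> sv x < b1.
Proof. move=> e hb hx; rewrite /sv e ltr_pdivrMr ?subr_gt0 //; nra. Qed.
End Seg.

Lemma segvalE (P Q : nat * rat) x : (P.1 < Q.1)%N ->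
  segval P Q x = ((Q.1%:R - x) * P.2 + (x - P.1%:R) * Q.2) / (Q.1%:R - P.1%:R).
Proof. by move=> h; rewrite /segval ifF // ltn_eqF. Qed.

Lemma segval_eq (P Q : nat * rat) x : P.1 = Q.1 -> segval P Q x = P.2.
Proof. by move=> h; rewrite /segval h eqxx. Qed.

Lemma natlt (a b : nat) (x : rat) : a%:R <= x -> x <= b%:R -> a <> b -> (a < b)%N.
Proof.
move=> h1 h2 ne; have : (a <= b)%N by rewrite -(ler_nat rat); exact: le_trans h2.
by rewrite leq_eqVlt => /orP[/eqP//|].
Qed.

Lemma hull_lem (pts : seq (nat * rat)) (l : nat) :
  (l, 0) \in pts -> (forall P, P \in pts -> 0 <= P.2) ->
  (forall P, P \in pts -> (P.1 < l)%N -> 0 < P.2) ->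
  negpart_length pts l%:R.
Proof.
move=> hL hge hgt.
have segL : forall R x, R \in pts -> (l < R.1)%N -> l%:R <= x <= R.1%:R ->
    segval (l, 0) R x <= R.2.
  move=> [r1 r2] x hR /= hl /andP[h1 h2]; rewrite segvalE //=.
  by apply: sv_L => //; [rewrite ltr_nat | exact: (hge _ hR)].
have segRs : forall R x, R \in pts -> (R.1 < l)%N -> R.1%:R < x <= l%:R ->
    segval R (l, 0) x < R.2.
  move=> [r1 r2] x hR /= hl /andP[h1 h2]; rewrite segvalE //=.
  by apply: sv_Rs => //; [rewrite ltr_nat | exact: (hgt _ hR)].
split; [|split].
- exists 0; split.
    by exists (l, 0), (l, 0); split => //=; rewrite ?lexx // segval_eq.
  move=> [p1 p2] [q1 q2] hP hQ /andP[h1 h2] /=.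
  case: (eqVneq p1 q1) => [e|ne]; first by rewrite segval_eq //; exact: (hge _ hP).
  have hlt : (p1 < q1)%N by apply: (@natlt p1 q1 _ h1 h2) => e; rewrite e eqxx in ne.
  rewrite segvalE //=; apply: sv_ge0; rewrite ?ltr_nat ?h1 ?h2 //.
    exact: (hge _ hP). exact: (hge _ hQ).
- move=> x1 x2 y1 y2 [[[p1 p2] [[q1 q2] [hP hQ /andP[h1 h2] ->]]] _] [_ H2] hx hx2.
  have hpl : (p1 < l)%N by rewrite -(ltr_nat rat); apply: (le_lt_trans h1); exact: lt_le_trans hx hx2.
  have hp2 : 0 < p2 := hgt _ hP hpl.
  have PL : y2 < p2.
    apply: (le_lt_trans (H2 _ _ hP hL _)); first by rewrite /= hx2 andbT (le_trans h1) // ltW.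
    by apply: (segRs _ _ hP) => //=; rewrite hx2 andbT (le_lt_trans h1).
  case: (eqVneq p1 q1) => [e|ne]; first by rewrite segval_eq.
  have hlt : (p1 < q1)%N by apply: (@natlt p1 q1 _ h1 h2) => e; rewrite e eqxx in ne.
  rewrite segvalE //=.
  case: (leP p2 q2) => hb.
    apply: (lt_le_trans PL); apply: sv_ge1; rewrite ?ltr_nat ?h1 ?h2 //.
  case: (leP x2 q1%:R) => hq.
    apply: (le_lt_trans (H2 _ _ hP hQ _)); first by rewrite /= hq andbT (le_trans h1) // ltW.
    rewrite segvalE //=; apply: sv_decr => //; rewrite ltr_nat //.
  have hql : (q1 < l)%N by rewrite -(ltr_nat rat); exact: lt_le_trans hq hx2.
  have : y2 < q2.
    apply: (le_lt_trans (H2 _ _ hQ hL _)); first by rewrite /= hx2 andbT ltW.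
    by apply: (segRs _ _ hQ) => //=; rewrite hq hx2.
  move=> h; apply: (lt_le_trans h); apply: sv_ge2; rewrite ?ltr_nat ?h1 ?h2 ?(ltW hb) //.
- move=> x1 x2 y1 y2 [_ H1] [[[p1 p2] [[q1 q2] [hP hQ /andP[h1 h2] ->]]] _] hx hx12.
  have hq1 : (l < q1)%N by rewrite -(ltr_nat rat); apply: (le_lt_trans hx); exact: lt_le_trans hx12 h2.
  have LQ : y1 <= q2.
    apply: (le_trans (H1 _ _ hL hQ _)); first by rewrite /= hx (le_trans (ltW hx12)).
    by apply: (segL _ _ hQ) => //=; rewrite hx (le_trans (ltW hx12)).
  case: (eqVneq p1 q1) => [e|ne].
    rewrite segval_eq //=; rewrite -e in hq1 h2.
    apply: (le_trans (H1 _ _ hL hP _)); first by rewrite /= hx (le_trans (ltW hx12)).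
    by apply: (segL _ _ hP) => //=; rewrite hx (le_trans (ltW hx12)).
  have hlt : (p1 < q1)%N by apply: (@natlt p1 q1 _ h1 h2) => e; rewrite e eqxx in ne.
  rewrite segvalE //=.
  case: (leP q2 p2) => hb.
    apply: (le_trans LQ); apply: sv_ge2; rewrite ?ltr_nat ?h1 ?h2 //.
  have hy : p2 <= ((q1%:R - x2) * p2 + (x2 - p1%:R) * q2) / (q1%:R - p1%:R).
    apply: sv_ge1; rewrite ?ltr_nat ?h1 ?h2 ?(ltW hb) //.
  case: (leP p1%:R x1) => hp.
    apply: (le_trans (H1 _ _ hP hQ _)); first by rewrite /= hp (le_trans (ltW hx12)).
    rewrite segvalE //=; apply: sv_incr; rewrite ?ltr_nat ?(ltW hb) ?(ltW hx12) //.
  have hp1 : (l < p1)%N by rewrite -(ltr_nat rat); exact: le_lt_trans hx hp.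
  apply: (le_trans (H1 _ _ hL hP _)); first by rewrite /= hx (ltW hp).
  apply: (le_trans _ hy); apply: (segL _ _ hP) => //=; by rewrite hx (ltW hp).
Qed.

Lemma bigmin_le (T : eqType) (z : T) (s : seq T) (w : T -> rat) d c :
  c \in s -> c != z -> \big[Num.min/d]_(x <- s | x != z) w x <= w c.
Proof.
elim: s => //= y s IH; rewrite in_cons big_cons => /orP[/eqP<-|hc] hz.
  by rewrite hz ge_min lexx.
by case: ifP => _; [rewrite ge_min IH ?orbT | exact: IH].
Qed.

Lemma bigmin_ge (T : eqType) (z : T) (s : seq T) (w : T -> rat) d t :
  t <= d -> (forall x, x \in s -> x != z -> t <= w x) ->
  t <= \big[Num.min/d]_(x <- s | x != z) w x.
Proof.
move=> hd; elim: s => [|y s IH] h; first by rewrite big_nil.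
rewrite big_cons; case: ifP => hy; last by apply: IH => x hx; apply: h; rewrite in_cons hx orbT.
rewrite le_min h ?mem_head ?hy //=; apply: IH => x hx; apply: h; rewrite ?in_cons ?hx ?orbT //.
Qed.

Lemma bigmin_gt (T : eqType) (z : T) (s : seq T) (w : T -> rat) d t :
  t < d -> (forall x, x \in s -> x != z -> t < w x) ->
  t < \big[Num.min/d]_(x <- s | x != z) w x.
Proof.
move=> hd; elim: s => [|y s IH] h; first by rewrite big_nil.
rewrite big_cons; case: ifP => hy; last by apply: IH => x hx; apply: h; rewrite in_cons hx orbT.
rewrite lt_min h ?mem_head ?hy //=; apply: IH => x hx; apply: h; rewrite ?in_cons ?hx ?orbT //.
Qed.

Lemma pts_memG n (u : nat -> option rat) P :
  P \in pts_of n u -> (P.1 < n)%N /\ u P.1 = Some P.2.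
Proof.
rewrite /pts_of mem_pmap => /mapP[k]; rewrite mem_iota add0n => hk.
by case e: (u k) => [r|] //= [->].
Qed.

Lemma pts_inG n (u : nat -> option rat) k y :
  (k < n)%N -> u k = Some y -> (k, y) \in pts_of n u.
Proof.
move=> hk e; rewrite /pts_of mem_pmap; apply/mapP; exists k; first by rewrite mem_iota.
by rewrite e.
Qed.
Lemma monic_small (R : nzRingType) (G a Q : {poly R}) :
  G \is monic -> (size a < size G)%N -> a = G * Q -> Q = 0.
Proof.
move=> mG ha e; apply/eqP; apply/negPn/negP => nQ.
move: ha; rewrite e size_monicM // -(prednK (etrans (size_poly_gt0 Q) nQ)) addnS /=.
by rewrite ltnNge leq_addr.
Qed.

Lemma exp_key (R : comNzRingType) (G : {poly R}) : G \is monic ->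
  forall n l (c : nat -> {poly R}) H,
  (forall k, (size (c k) < size G)%N) -> (forall k, (n <= k)%N -> c k = 0) ->
  \sum_(k < n) c k * G ^+ k = G ^+ l * H ->
  (forall k, (k < l)%N -> c k = 0) /\ exists T, H = c l + G * T.
Proof.
move=> mG; elim=> [|n IH] l c H hs hz.
  rewrite big_ord0 => /esym e.
  have H0 : H = 0 by apply: (@monic_small _ (G ^+ l) 0 H) => //;
    [exact: monic_exp | rewrite size_poly0 size_poly_gt0 monic_neq0 // monic_exp].
  by split=> [k _|]; [exact: hz | exists 0; rewrite H0 hz // mulr0 addr0].
rewrite big_ord_recl /= expr0 mulr1.
under eq_bigr => k _ do rewrite /bump /= add1n exprS mulrCA.
rewrite -mulr_sumr.
set S := \sum_(_ < _) _.
case: l => [|l] e.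
  split=> [k //|]; exists S; by move: e; rewrite expr0 mul1r => ->.
have e2 : c 0%N = G * (G ^+ l * H - S) by rewrite mulrBr mulrA -exprS -e addrK.
have hS := monic_small mG (hs 0%N) e2.
have c0 : c 0%N = 0 by rewrite e2 hS mulr0.
have e3 : \sum_(k < n) c k.+1 * G ^+ k = G ^+ l * H.
  by apply/eqP; rewrite -subr_eq0 -/S -opprB hS oppr0.
have [h1 [T hT]] := IH l (fun k => c k.+1) H (fun k => hs k.+1) (fun k hk => hz k.+1 hk) e3.
split; last by exists T.
by case=> [|k] hk //; apply: h1.
Qed.
Section Padic.
Variables (p : nat) (Om : closedFieldType) (v : Om -> rat) (Zp : Om -> Prop).
Hypothesis hp : prime p.
Hypothesis HOm : padic_closure p v Zp.

Let vM : forall x y, x != 0 -> y != 0 -> v (x * y) = v x + v y.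
Proof. by case: HOm => -[]. Qed.
Let vA : forall x y, x != 0 -> y != 0 -> x + y != 0 -> Num.min (v x) (v y) <= v (x + y).
Proof. by case: HOm => -[]. Qed.
Let vnz : forall n : nat, (0 < n)%N -> n%:R != 0 :> Om.
Proof. by case: HOm => -[]. Qed.
Let vcop : forall n : nat, (0 < n)%N -> coprime n p -> v n%:R = 0.
Proof. by case: HOm => -[]. Qed.
Let vp : v p%:R = 1.
Proof. by case: HOm => -[]. Qed.
Let Z0 : Zp 0. Proof. by case: HOm => _ [[]]. Qed.
Let Z1 : Zp 1. Proof. by case: HOm => _ [[]]. Qed.
Let ZB : forall x y, Zp x -> Zp y -> Zp (x - y). Proof. by case: HOm => _ [[]]. Qed.
Let ZM : forall x y, Zp x -> Zp y -> Zp (x * y). Proof. by case: HOm => _ [[]]. Qed.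
Let Zv : forall x, Zp x -> x != 0 -> 0 <= v x. Proof. by case: HOm => _ [[]]. Qed.
Let Zd : forall x k, Zp x -> exists m : int, x = m%:~R \/ k <= v (x - m%:~R).
Proof. by case: HOm => _ [_ []]. Qed.

Lemma ZN x : Zp x -> Zp (- x). Proof. by move=> h; rewrite -sub0r; apply: ZB. Qed.
Lemma ZD x y : Zp x -> Zp y -> Zp (x + y).
Proof. by move=> hx hy; rewrite -[y]opprK; apply: ZB => //; apply: ZN. Qed.
Lemma Zint (z : int) : Zp z%:~R.
Proof.
have Zn : forall n : nat, Zp n%:R by elim=> [|n IH]; rewrite ?mulr0n // -natr1; apply: ZD.
by case: z => n; rewrite ?NegzE ?intrN; [ |apply: ZN]; apply: Zn.
Qed.

Lemma v1 : v 1 = 0.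
Proof. have := vM (oner_neq0 Om) (oner_neq0 Om); rewrite mulr1 => h; lra. Qed.
Lemma vNone : v (-1) = 0.
Proof.
have n1 : (-1 : Om) != 0 by rewrite oppr_eq0 oner_neq0.
have := vM n1 n1; rewrite mulrNN mulr1 v1 => h; lra.
Qed.
Lemma vopp x : x != 0 -> v (- x) = v x.
Proof.
move=> nx; rewrite -mulN1r vM ?vNone ?add0r //; by rewrite oppr_eq0 oner_neq0.
Qed.

Definition Ob (x : Om) := (x == 0) || (0 <= v x).
Definition Mb (x : Om) := (x == 0) || (0 < v x).
Definition Gt (t : rat) (x : Om) := (x == 0) || (t < v x).
Definition Ge (t : rat) (x : Om) := (x == 0) || (t <= v x).

Lemma Gt_add t x y : Gt t x -> Gt t y -> Gt t (x + y).
Proof.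
rewrite /Gt; case: (eqVneq x 0) => [->|nx]; first by rewrite add0r => _.
case: (eqVneq y 0) => [->|ny]; first by rewrite addr0 /= => h _; rewrite h orbT.
case: (eqVneq (x + y) 0) => //= nxy hx hy.
by apply: (lt_le_trans _ (vA nx ny nxy)); rewrite lt_min hx hy.
Qed.
Lemma Ge_add t x y : Ge t x -> Ge t y -> Ge t (x + y).
Proof.
rewrite /Ge; case: (eqVneq x 0) => [->|nx]; first by rewrite add0r => _.
case: (eqVneq y 0) => [->|ny]; first by rewrite addr0 /= => h _; rewrite h orbT.
case: (eqVneq (x + y) 0) => //= nxy hx hy.
by apply: (le_trans _ (vA nx ny nxy)); rewrite le_min hx hy.
Qed.
Lemma Gt_opp t x : Gt t x -> Gt t (- x).
Proof. by rewrite /Gt oppr_eq0; case: (eqVneq x 0) => //= nx; rewrite vopp. Qed.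
Lemma Ge_opp t x : Ge t x -> Ge t (- x).
Proof. by rewrite /Ge oppr_eq0; case: (eqVneq x 0) => //= nx; rewrite vopp. Qed.
Lemma Ge_mul s t x y : Ge s x -> Ge t y -> Ge (s + t) (x * y).
Proof.
rewrite /Ge mulf_eq0; case: (eqVneq x 0) => //= nx; case: (eqVneq y 0) => //= ny.
by rewrite vM // => h1 h2; exact: lerD.
Qed.
Lemma Gt_mul s t x y : Ge s x -> Gt t y -> Gt (s + t) (x * y).
Proof.
rewrite /Ge /Gt mulf_eq0; case: (eqVneq x 0) => //= nx; case: (eqVneq y 0) => //= ny.
by rewrite vM // => h1 h2; apply: ler_ltD.
Qed.

Lemma Ge_sum t (I : Type) (r : seq I) (P : pred I) (F : I -> Om) :
  (forall i, P i -> Ge t (F i)) -> Ge t (\sum_(i <- r | P i) F i).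
Proof.
move=> h; apply: (big_rec (fun y => Ge t y)); first by rewrite /Ge eqxx.
by move=> i y Pi hy; apply: Ge_add => //; apply: h.
Qed.
Lemma Gt_sum t (I : Type) (r : seq I) (P : pred I) (F : I -> Om) :
  (forall i, P i -> Gt t (F i)) -> Gt t (\sum_(i <- r | P i) F i).
Proof.
move=> h; apply: (big_rec (fun y => Gt t y)); first by rewrite /Gt eqxx.
by move=> i y Pi hy; apply: Gt_add => //; apply: h.
Qed.

Lemma Zp_O x : Zp x -> Ge 0 x.
Proof. by move=> hx; rewrite /Ge; case: eqP => //= /eqP; apply: Zv. Qed.

Lemma Ge_exp x n : Ge 0 x -> Ge 0 (x ^+ n).
Proof.
move=> hx; elim: n => [|n IH]; first by rewrite /Ge expr0 v1 lexx orbT.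
by rewrite exprS -[0]addr0; apply: Ge_mul.
Qed.

Lemma vexp x n : x != 0 -> v (x ^+ n) = n%:R * v x.
Proof.
move=> nx; elim: n => [|n IH]; first by rewrite expr0 v1 mul0r.
by rewrite exprS vM ?expf_neq0 // IH -natr1; ring.
Qed.

Lemma int_M (z : int) : Gt 0 z%:~R -> (p %| `|z|)%N.
Proof.
have key : forall n : nat, Gt 0 n%:R -> (p %| n)%N.
  move=> n; rewrite /Gt; case: (posnP n) => [->|np]; first by rewrite dvdn0.
  rewrite (negbTE (vnz np)) /=; apply: contraLR => hd.
  by rewrite vcop ?ltxx // coprime_sym prime_coprime.
case: z => n; rewrite ?NegzE ?intrN /=; first by apply: key.
move=> h; apply: key; by move/Gt_opp: h; rewrite opprK.
Qed.

Lemma intr_Fp0 (z : int) : (p %| `|z|)%N -> (z%:~R : 'F_p) = 0.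
Proof.
case: z => n /=; rewrite ?NegzE ?intrN => h; apply/eqP.
  by rewrite -(dvdn_pcharf (pchar_Fp hp)).
by rewrite oppr_eq0 -(dvdn_pcharf (pchar_Fp hp)).
Qed.

Lemma intr_Fp0E (z : int) : ((z%:~R : 'F_p) == 0) = (p %| `|z|)%N.
Proof.
case: z => n /=; rewrite ?NegzE ?intrN ?oppr_eq0; first by rewrite -(dvdn_pcharf (pchar_Fp hp)).
by rewrite -(dvdn_pcharf (pchar_Fp hp)).
Qed.

Definition rep (x : Om) : int := epsilon (inhabits 0%Z) (fun m : int => Gt 0 (x - m%:~R)).
Definition res (x : Om) : 'F_p := (rep x)%:~R.

Lemma rep_spec x : Zp x -> Gt 0 (x - (rep x)%:~R).
Proof.
move=> hx; rewrite /rep; apply: (epsilon_spec (inhabits 0%Z) (fun m : int => Gt 0 (x - m%:~R))); have [m [e|h]] := Zd 1 hx; exists m.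
  by rewrite /Gt e subrr eqxx.
by rewrite /Gt (lt_le_trans _ h) ?orbT.
Qed.

Lemma res_eq x (m : int) : Zp x -> Gt 0 (x - m%:~R) -> res x = m%:~R.
Proof.
move=> hx hm; have hr := rep_spec hx.
have : Gt 0 ((rep x - m)%:~R).
  have -> : (rep x - m)%:~R = (x - m%:~R) - (x - (rep x)%:~R) :> Om by rewrite intrB; ring.
  by rewrite -[0]addr0; apply: Gt_add => //; apply: Gt_opp.
move/int_M/intr_Fp0; rewrite intrB /res => /eqP; rewrite subr_eq0 => /eqP.
exact.
Qed.

Lemma res_int (z : int) : res z%:~R = z%:~R.
Proof. by apply: res_eq; [exact: Zint | rewrite /Gt subrr eqxx]. Qed.
Lemma res0 : res 0 = 0. Proof. exact: (res_int 0). Qed.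
Lemma res1 : res 1 = 1. Proof. exact: (res_int 1). Qed.
Lemma res_nat (n : nat) : res n%:R = n%:R. Proof. exact: (res_int n). Qed.

Lemma res_add x y : Zp x -> Zp y -> res (x + y) = res x + res y.
Proof.
move=> hx hy; rewrite /res -intrD; apply: res_eq; first exact: ZD.
have -> : x + y - (rep x + rep y)%:~R = (x - (rep x)%:~R) + (y - (rep y)%:~R) by rewrite intrD; ring.
by rewrite -[0]addr0; apply: Gt_add; apply: rep_spec.
Qed.
Lemma res_opp x : Zp x -> res (- x) = - res x.
Proof.
move=> hx; apply/eqP; rewrite -subr_eq0 opprK -res_add ?addNr ?res0 //; exact: ZN.
Qed.
Lemma res_mul x y : Zp x -> Zp y -> res (x * y) = res x * res y.
Proof.
move=> hx hy; rewrite /res -intrM; apply: res_eq; first exact: ZM.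
have -> : x * y - (rep x * rep y)%:~R = x * (y - (rep y)%:~R) + (rep y)%:~R * (x - (rep x)%:~R)
  by rewrite intrM; ring.
rewrite -[0]addr0; apply: Gt_add; rewrite -[0]addr0; apply: Gt_mul;
  rewrite ?rep_spec //; apply: Zp_O => //; exact: Zint.
Qed.

Lemma int_dvd_M (z : int) : (p %| `|z|)%N -> Gt 0 z%:~R.
Proof.
have key : forall n : nat, (p %| n)%N -> Gt 0 n%:R.
  move=> n /dvdnP[q ->]; rewrite natrM -[0]addr0; apply: Gt_mul.
    exact: (Zp_O (Zint q)).
  by rewrite /Gt vp ltr01 orbT.
case: z => n /=; rewrite ?NegzE ?intrN; first exact: key.
by move=> h; apply: Gt_opp; apply: key.
Qed.

Lemma res_M x : Zp x -> (res x == 0) = Gt 0 x.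
Proof.
move=> hx; apply/idP/idP => h.
  have hr := rep_spec hx; move: h; rewrite /res intr_Fp0E => /int_dvd_M hd.
  by have := Gt_add hr hd; rewrite subrK.
by rewrite (res_eq (m:=0)) // subr0.
Qed.


Definition resp (P : {poly Om}) : {poly 'F_p} := map_poly res P.
Notation Zpx := (in_Zpx Zp).

Lemma coef_resp P i : (resp P)`_i = res P`_i.
Proof. by rewrite coef_map_id0 // res0. Qed.

Lemma size_map_le (R S : nzRingType) (f : R -> S) (P : {poly R}) :
  (size (map_poly f P) <= size P)%N.
Proof. by rewrite /map_poly; apply: size_poly. Qed.

Lemma res_sum (I : Type) (r : seq I) (Pr : pred I) (F : I -> Om) :
  (forall i, Pr i -> Zp (F i)) ->
  Zp (\sum_(i <- r | Pr i) F i) /\ res (\sum_(i <- r | Pr i) F i) = \sum_(i <- r | Pr i) res (F i).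
Proof.
move=> hF; apply: (big_rec2 (fun a b => Zp a /\ res a = b)); first by rewrite res0.
move=> i y1 y2 Pi [h1 h2]; split; first by apply: ZD => //; apply: hF.
by rewrite res_add ?h2 //; apply: hF.
Qed.

Lemma Zpx_add P Q : Zpx P -> Zpx Q -> Zpx (P + Q).
Proof. by move=> hP hQ i; rewrite coefD; apply: ZD. Qed.
Lemma Zpx_opp P : Zpx P -> Zpx (- P).
Proof. by move=> hP i; rewrite coefN; apply: ZN. Qed.
Lemma Zpx_mul P Q : Zpx P -> Zpx Q -> Zpx (P * Q).
Proof. by move=> hP hQ i; rewrite coefM; apply: (proj1 (@res_sum _ _ _ _ _)) => j _; apply: ZM. Qed.
Lemma Zpx1 : Zpx 1. Proof. by move=> i; rewrite coef1; case: (i == 0%N). Qed.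
Lemma Zpx0 : Zpx 0. Proof. by move=> i; rewrite coef0. Qed.
Lemma Zpx_exp P n : Zpx P -> Zpx (P ^+ n).
Proof. move=> hP; elim: n => [|n IH]; first by rewrite expr0; exact: Zpx1. by rewrite exprS; apply: Zpx_mul. Qed.

Lemma resp_add P Q : Zpx P -> Zpx Q -> resp (P + Q) = resp P + resp Q.
Proof. by move=> hP hQ; apply/polyP => i; rewrite coefD !coef_resp coefD res_add. Qed.
Lemma resp_opp P : Zpx P -> resp (- P) = - resp P.
Proof. by move=> hP; apply/polyP => i; rewrite coefN !coef_resp coefN res_opp. Qed.
Lemma resp_mul P Q : Zpx P -> Zpx Q -> resp (P * Q) = resp P * resp Q.
Proof.
move=> hP hQ; apply/polyP => i; rewrite coef_resp !coefM (proj2 (@res_sum _ _ _ _ _)); last first.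
  by move=> j _; apply: ZM.
by apply: eq_bigr => j _; rewrite res_mul // !coef_resp.
Qed.
Lemma resp1 : resp 1 = 1.
Proof. by apply/polyP => i; rewrite coef_resp !coef1; case: (i == 0%N); rewrite ?res1 ?res0. Qed.
Lemma resp_exp P n : Zpx P -> resp (P ^+ n) = resp P ^+ n.
Proof.
move=> hP; elim: n => [|n IH]; first by rewrite !expr0 resp1.
by rewrite !exprS resp_mul ?IH //; apply: Zpx_exp.
Qed.
Lemma resp_sum n (F : nat -> {poly Om}) : (forall k, Zpx (F k)) ->
  Zpx (\sum_(k < n) F k) /\ resp (\sum_(k < n) F k) = \sum_(k < n) resp (F k).
Proof.
move=> hF; apply: (big_rec2 (fun a b => Zpx a /\ resp a = b)).
  by split; [exact: Zpx0 | apply/polyP => i; rewrite coef_resp !coef0 res0].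
move=> i y1 y2 _ [h1 h2]; split; first exact: Zpx_add.
by rewrite resp_add ?h2.
Qed.

Lemma Zpx_toOm (P : {poly int}) : Zpx (toOm Om P).
Proof. move=> i; rewrite /toOm coef_map_id0 //. exact: Zint. Qed.
Lemma resp_toOm (P : {poly int}) : resp (toOm Om P) = redp p P.
Proof.
apply/polyP => i; rewrite coef_resp /toOm /redp !coef_map_id0 //.
exact: res_int.
Qed.

Definition liftp (q : {poly 'F_p}) : {poly Om} := map_poly (fun y : 'F_p => (y : nat)%:R) q.
Lemma Zpx_lift q : Zpx (liftp q).
Proof. by move=> i; rewrite /liftp coef_map_id0 //; exact: (Zint (Posz _)). Qed.
Lemma resp_lift q : resp (liftp q) = q.
Proof.
by apply/polyP => i; rewrite coef_resp /liftp coef_map_id0 // res_nat natr_Zp.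
Qed.


Lemma lead_in (B : {poly Om}) : B != 0 -> lead_coef B \in (B : seq Om).
Proof.
move=> nB; rewrite lead_coefE; apply: mem_nth.
by rewrite prednK // size_poly_gt0.
Qed.

Lemma coef_of_mem (B : {poly Om}) c : c \in (B : seq Om) -> exists i, B`_i = c.
Proof. by case/(nthP 0) => i _ <-; exists i. Qed.

Lemma Gt0_pos x : Gt 0 x -> x != 0 -> 0 < v x.
Proof. by rewrite /Gt => /orP[/eqP->|//]; rewrite eqxx. Qed.

Lemma vpoly_ge0 B : B != 0 -> Zpx B -> 0 <= vpoly v B.
Proof.
move=> nB hB; rewrite /vpoly; apply: bigmin_ge.
  by apply: Zv; [rewrite lead_coefE; apply: hB | rewrite lead_coef_eq0].
by move=> x /coef_of_mem[i <-] nx; apply: Zv.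
Qed.

Lemma vpoly_gt0 B : B != 0 -> Zpx B -> resp B = 0 -> 0 < vpoly v B.
Proof.
move=> nB hB r0.
have h : forall i, B`_i != 0 -> 0 < v B`_i.
  move=> i ni; apply: Gt0_pos => //; rewrite -res_M // -coef_resp r0 coef0 //.
rewrite /vpoly; apply: bigmin_gt.
  by rewrite lead_coefE; apply: h; rewrite -lead_coefE lead_coef_eq0.
by move=> x /coef_of_mem[i <-] nx; apply: h.
Qed.

Lemma vpoly_eq0 B : Zpx B -> resp B != 0 -> vpoly v B = 0.
Proof.
move=> hB nr.
have nB : B != 0 by apply: contraNneq nr => ->; apply/eqP/polyP => i; rewrite coef_resp !coef0 res0.
pose i := (size (resp B)).-1.
have hi : res B`_i != 0 by rewrite -coef_resp -lead_coefE lead_coef_eq0.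
have nc : B`_i != 0 by apply: contraNneq hi => ->; rewrite res0.
have vc : v B`_i = 0.
  apply/eqP; rewrite eq_le Zv // andbT; move: hi; rewrite res_M //.
  by rewrite /Gt (negbTE nc) /= -leNgt.
apply/eqP; rewrite eq_le vpoly_ge0 // andbT -vc /vpoly; apply: bigmin_le => //.
apply: mem_nth; rewrite ltnNge; apply: contra nc => hs; rewrite nth_default //.
Qed.

Lemma phi_side (F : {poly int}) (phi : {poly Om}) (b : seq {poly Om}) (l : nat)
    (Hq : {poly 'F_p}) :
  phi \is monic -> Zpx phi -> (1 < size phi)%N -> (forall k, Zpx b`_k) ->
  is_expansion (toOm Om F) phi b ->
  redp p F = resp phi ^+ l * Hq -> coprimep (resp phi) Hq ->
  negpart_length (pts_of (size b) (uP v b)) l%:R.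
Proof.
move=> mphi Zphi sphi Zb [eb sb] eF cop.
have l1 : res (lead_coef phi) != 0 by rewrite (eqP mphi) res1 oner_neq0.
have mG : resp phi \is monic.
  by rewrite monicE /resp lead_coef_map_id0 ?res0 // (eqP mphi) res1.
have sG : size (resp phi) = size phi by rewrite /resp size_map_poly_id0.
have e : \sum_(k < size b) resp b`_k * resp phi ^+ k = resp phi ^+ l * Hq.
  rewrite -eF -resp_toOm eb (proj2 (@resp_sum (size b) (fun k => b`_k * phi ^+ k) _)); last first.
    by move=> k; apply: Zpx_mul => //; apply: Zpx_exp.
  by apply: eq_bigr => k _; rewrite resp_mul ?resp_exp //; apply: Zpx_exp.
have hsz : forall k, (size (resp b`_k) < size (resp phi))%N.
  move=> k; rewrite sG; case: (ltnP k (size b)) => hk.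
    exact: leq_ltn_trans (size_map_le _ _) (sb k hk).
  by rewrite nth_default // /resp map_poly0 size_poly0 ltnW.
have hbey : forall k, (size b <= k)%N -> resp b`_k = 0.
  by move=> k hk; rewrite nth_default // /resp map_poly0.
have [hz [T hT]] := exp_key mG hsz hbey e.
have nbl : resp b`_l != 0.
  apply/eqP => h0; move: cop; rewrite hT h0 add0r coprimepMr coprimepp sG.
  by case/andP => /eqP e1; move: sphi; rewrite e1.
have nbl' : b`_l != 0 by apply: contraNneq nbl => ->; rewrite /resp map_poly0.
have hl : (l < size b)%N by rewrite ltnNge; apply: contra nbl' => h; rewrite nth_default.
apply: hull_lem.
- apply: pts_inG => //; rewrite /uP (negbTE nbl') vpoly_eq0 //.
- move=> P /pts_memG[hk]; rewrite /uP; case: eqP => // /eqP nb [<-].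
  exact: vpoly_ge0.
- move=> P /pts_memG[hk]; rewrite /uP; case: eqP => // /eqP nb [<-] hkl.
  by apply: vpoly_gt0 => //; apply: hz.
Qed.


Lemma hornerO (P : {poly Om}) alpha : Zpx P -> Ge 0 alpha -> Ge 0 P.[alpha].
Proof.
move=> hP ha; rewrite horner_coef; apply: Ge_sum => i _.
rewrite -[0]addr0; apply: Ge_mul; [exact: Zp_O | exact: Ge_exp].
Qed.

Lemma hornerMb (P : {poly Om}) alpha : Zpx P -> resp P = 0 -> Ge 0 alpha -> Gt 0 P.[alpha].
Proof.
move=> hP r0 ha; rewrite horner_coef; apply: Gt_sum => i _.
rewrite mulrC -[0]addr0; apply: Gt_mul; first exact: Ge_exp.
by rewrite -res_M // -coef_resp r0 coef0.
Qed.

Lemma root_O (F : {poly int}) alpha : F \is monic -> root (toOm Om F) alpha -> Ge 0 alpha.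
Proof.
move=> mF r; rewrite /Ge; case: (eqVneq alpha 0) => //= na.
rewrite leNgt; apply/negP => hneg.
set Fo := toOm Om F.
have l1 : (lead_coef F)%:~R != 0 :> Om by rewrite (eqP mF) oner_neq0.
have sF : size Fo = size F by rewrite /Fo /toOm size_map_poly_id0.
have lF : lead_coef Fo = 1 by rewrite /Fo /toOm lead_coef_map_id0 // (eqP mF).
have nF : F != 0 by apply: monic_neq0.
set n := (size F).-1.
have hs : size Fo = n.+1 by rewrite sF /n prednK // size_poly_gt0.
move: r; rewrite /root horner_coef hs big_ord_recr /=.
have -> : Fo`_n = 1 by rewrite -lF lead_coefE hs.
rewrite mul1r; set S := \sum_(_ < _) _ => /eqP e.
set t := n%:R * v alpha.
have hS : Gt t S.
  apply: Gt_sum => i _; rewrite -[t]add0r; apply: Gt_mul.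
    by apply: Zp_O; exact: (Zpx_toOm F i).
  rewrite /Gt expf_eq0 (negbTE na) andbF /= vexp // /t.
  have hi : (i%:R : rat) < n%:R by rewrite ltr_nat. nra.
have nan : alpha ^+ n != 0 by rewrite expf_neq0.
have eS : S = - alpha ^+ n by apply/eqP; rewrite -addr_eq0 e.
move: hS; rewrite /Gt eS oppr_eq0 (negbTE nan) /= vopp // vexp // ltxx.
by [].
Qed.

Lemma part2 (F : {poly int}) (phi hh : {poly Om}) alpha :
  F \is monic -> Zpx phi -> Zpx hh -> coprimep (resp phi) (resp hh) ->
  root (toOm Om F) alpha -> phi.[alpha] != 0 -> 0 < v phi.[alpha] ->
  hh.[alpha] != 0 /\ v hh.[alpha] = 0.
Proof.
move=> mF Zphi Zh cop r nphi vphi.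
have ha := root_O mF r.
have [[u w] /= huw] := Bezout_eq1_coprimepP _ _ cop.
pose E := liftp u * phi + liftp w * hh - 1.
have ZE : Zpx E.
  apply: Zpx_add; last by apply: Zpx_opp; apply: Zpx1.
  by apply: Zpx_add; apply: Zpx_mul => //; apply: Zpx_lift.
have rE : resp E = 0.
  rewrite /E resp_add ?resp_opp ?resp1 ?resp_add ?resp_mul ?resp_lift ?huw ?subrr //;
    try apply: Zpx_lift; try apply: Zpx1; try (apply: Zpx_opp; apply: Zpx1);
    try (apply: Zpx_mul => //; apply: Zpx_lift).
  by apply: Zpx_add; apply: Zpx_mul => //; apply: Zpx_lift.
have GE := hornerMb ZE rE ha.
have GU : Gt 0 ((liftp u).[alpha] * phi.[alpha]).
  rewrite -[0]addr0; apply: Gt_mul; first by apply: hornerO => //; apply: Zpx_lift.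
  by rewrite /Gt vphi orbT.
have GW : ~~ Gt 0 ((liftp w).[alpha] * hh.[alpha]).
  apply/negP => GW.
  have : Gt 0 1.
    have -> : (1 : Om) = (liftp u).[alpha] * phi.[alpha] + (liftp w).[alpha] * hh.[alpha] - E.[alpha].
      by rewrite /E !hornerE; ring.
    by rewrite -[0]addr0; apply: Gt_add; [rewrite -[0]addr0; apply: Gt_add | apply: Gt_opp].
  by rewrite /Gt oner_eq0 v1 ltxx.
move: GW; rewrite /Gt negb_or mulf_eq0 negb_or -leNgt => /andP[/andP[nw nh]].
rewrite vM // => hle; split => //.
have h1 := hornerO (Zpx_lift w) ha; have h2 := hornerO Zh ha.
move: h1 h2; rewrite /Ge (negbTE nw) (negbTE nh) /= => h1 h2.
apply/eqP; rewrite eq_le h2 andbT; lra.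
Qed.

End Padic.

Lemma intr_eq0_gen (R : nzRingType) (d : nat) :
  (forall n : nat, ((n%:R : R) == 0) = (d %| n)%N) ->
  forall z : int, ((z%:~R : R) == 0) = (d %| `|z|)%N.
Proof. by move=> hd [n|n]; rewrite ?NegzE ?intrN ?oppr_eq0 /= hd. Qed.

Lemma map_eq_R (R : nzRingType) (N : nat) (P Q : {poly int}) :
  (N%:R : R) = 0 -> (forall k, (N%:Z %| (P - Q)`_k)%Z) ->
  map_poly (intr : int -> R) P = map_poly intr Q.
Proof.
move=> hN hd; apply/polyP => k; rewrite !coef_map_id0 //; apply/eqP.
rewrite -subr_eq0 -intrB -coefB; have /dvdzP[q ->] := hd k.
by rewrite intrM -pmulrn hN mulr0.
Qed.

Lemma map_exp (R : nzRingType) (f gi : {poly int}) (a : seq {poly int}) :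
  f = \sum_(i < size a) a`_i * gi ^+ i ->
  map_poly (intr : int -> R) f =
  \sum_(k < size a) map_poly intr a`_k * map_poly intr gi ^+ k.
Proof. by move=> ->; rewrite rmorph_sum; apply: eq_bigr => k _; rewrite rmorphM rmorphXn. Qed.

Lemma vN_0 N m : ~~ (N %| m)%N -> vN N m = 0%N.
Proof. by case: m => [|m] //=; rewrite /vN /= => /negbTE ->. Qed.
Lemma vN_pos N m : (0 < m)%N -> (N %| m)%N -> (0 < vN N m)%N.
Proof. by case: m => [|m] // _; rewrite /vN /= => ->. Qed.

Lemma exp_side (R : comNzRingType) (f gi Hint : {poly int}) (a : seq {poly int}) (l N : nat) :
  (N%:R : R) = 0 -> gi \is monic ->
  is_expansion f gi a -> (forall k, (N%:Z %| (f - gi ^+ l * Hint)`_k)%Z) ->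
  (forall k, (k < l)%N -> map_poly (intr : int -> R) a`_k = 0) /\
  exists T, map_poly (intr : int -> R) Hint = map_poly intr a`_l + map_poly intr gi * T.
Proof.
move=> hN mg [ea sa] hd.
have mG : map_poly (intr : int -> R) gi \is monic by apply: monic_map.
have sG : size (map_poly (intr : int -> R) gi) = size gi.
  by rewrite size_map_poly_id0 // (eqP mg) oner_neq0.
have e : \sum_(k < size a) map_poly (intr : int -> R) a`_k * map_poly intr gi ^+ k =
    map_poly intr gi ^+ l * map_poly intr Hint.
  by rewrite -(map_exp R ea) (map_eq_R hN hd) rmorphM rmorphXn.
have hsz : forall k, (size (map_poly (intr : int -> R) a`_k) < size (map_poly (intr : int -> R) gi))%N.
  move=> k; rewrite sG; case: (ltnP k (size a)) => hk.
    exact: leq_ltn_trans (size_map_le _ _) (sa k hk).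
  by rewrite nth_default // map_poly0 size_poly0 size_poly_gt0 monic_neq0.
have hbey : forall k, (size a <= k)%N -> map_poly (intr : int -> R) a`_k = 0.
  by move=> k hk; rewrite nth_default // map_poly0.
exact: exp_key mG _ _ _ _ hsz hbey e.
Qed.

Lemma N_side (f gi Hint : {poly int}) (a : seq {poly int}) (l N p : nat) :
  prime p -> (p %| N)%N -> (1 < N)%N -> gi \is monic -> (1 < size gi)%N ->
  is_expansion f gi a -> (forall k, (N%:Z %| (f - gi ^+ l * Hint)`_k)%Z) ->
  coprimep (redp p gi) (redp p Hint) ->
  negpart_length (pts_of (size a) (uN N a)) l%:R.
Proof.
move=> hp hpN hN mg sg ea hd cop.
have NZ : (N%:R : 'Z_N) = 0 by apply: pchar_Zp.
have NF : (N%:R : 'F_p) = 0.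
  by case/dvdnP: hpN => q ->; rewrite natrM pchar_Fp_0 // mulr0.
have [hz _] := exp_side NZ mg ea hd.
have [_ [T hT]] := exp_side NF mg ea hd.
have hZ : forall z : int, ((z%:~R : 'Z_N) == 0) = (N %| `|z|)%N.
  by apply: intr_eq0_gen => n; rewrite -val_eqE /= val_Zp_nat.
have hF : forall z : int, ((z%:~R : 'F_p) == 0) = (p %| `|z|)%N.
  by apply: intr_eq0_gen => n; rewrite (dvdn_pcharf (pchar_Fp hp)).
have nal : map_poly (intr : int -> 'F_p) a`_l != 0.
  apply/eqP => h0; move: cop; rewrite /redp hT h0 add0r coprimepMr coprimepp.
  rewrite size_map_poly_id0 ?(eqP mg) ?oner_neq0 // => /andP[/eqP e1 _].
  by move: sg; rewrite e1.
pose j := (size (map_poly (intr : int -> 'F_p) a`_l)).-1.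
pose c : int := (a`_l)`_j.
have hj : c%:~R != 0 :> 'F_p.
  by rewrite -(coef_map_id0 _ _ (rmorph0 _)) -lead_coefE lead_coef_eq0.
have ncN : ~~ (N %| `|c|)%N.
  apply: contra hj => h; rewrite hF (dvdn_trans hpN) //.
have ncz : c != 0 by apply: contraNneq hj => e; rewrite e mulr0z.
have nal' : a`_l != 0 by apply: contraNneq ncz => e; rewrite /c e coef0.
have hl : (l < size a)%N by rewrite ltnNge; apply: contra nal' => h; rewrite nth_default.
apply: hull_lem.
- apply: pts_inG => //; rewrite /uN (negbTE nal'); congr Some.
  apply/eqP; rewrite eq_le; apply/andP; split; last first.
    by apply: bigmin_ge => // *; apply: ler0n.
  have hmem : c \in (a`_l : seq int).
    by apply: mem_nth; rewrite ltnNge; apply: contra ncz => hs; rewrite /c nth_default.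
  rewrite /vN_poly; apply: (le_trans (@bigmin_le _ 0 _ (fun x : int => (vN N `|x|)%:R) _ c hmem ncz)).
  by rewrite vN_0.
- move=> P /pts_memG[hk]; rewrite /uN; case: eqP => // _ [<-].
  by apply: bigmin_ge => // *; apply: ler0n.
- move=> P /pts_memG[hk]; rewrite /uN; case: eqP => // /eqP nb [<-] hkl.
  have hc : forall y, y \in (a`_(P.1) : seq int) -> y != 0 -> (0 < vN N `|y|)%N.
    move=> y /(nthP 0)[i _ <-] ncz'; apply: vN_pos; first by rewrite absz_gt0.
    by rewrite -hZ -(coef_map_id0 _ _ (rmorph0 _)) hz // coef0.
  rewrite /vN_poly; apply: bigmin_gt; last by move=> x hx nx; rewrite ltr0n hc.
  rewrite ltr0n hc //; last by rewrite lead_coef_eq0.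
  rewrite lead_coefE; apply: mem_nth; by rewrite prednK // size_poly_gt0.
Qed.

Lemma sqf_cop (F : fieldType) (A B : {poly F}) : squarefree_poly (A * B) -> coprimep A B.
Proof.
case=> nz hsq.
have hd : gcdp A B * gcdp A B %| A * B by apply: dvdp_mul; [exact: dvdp_gcdl | exact: dvdp_gcdr].
have hs := hsq _ hd.
rewrite coprimep_def eqn_leq hs /= size_poly_gt0 gcdp_eq0 negb_and.
by apply/orP; left; apply: contraNneq nz => ->; rewrite mul0r.
Qed.

Unset Implicit Arguments.
Theorem lemma3p3
  (* standing setup *)
  (f : {poly int}) (N : nat) (m : nat)
  (g : 'I_m -> {poly int}) (l : 'I_m -> nat)
  (Hf_monic : f \is monic)
  (Hf_irr : irreducible_poly (map_poly (fun c : int => c%:~R) f : {poly rat}))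
  (Hn : (1 < (size f).-1)%N)
  (HN : (1 < N)%N)
  (HNprimes : forall q : nat, prime q -> (q %| N)%N -> ((size f).-1 < q)%N)
  (Hg : forall j, g j \is monic /\ (1 < size (g j))%N)
  (Hl : forall j, (0 < l j)%N)
  (Hcong : forall k : nat,
     (N%:Z %| (f - \prod_(j < m) g j ^+ l j)`_k)%Z)
  (Hsqf : forall q : nat, prime q -> (q %| N)%N ->
     forall j, squarefree_poly (redp q (g j)))
  (Hcop : forall q : nat, prime q -> (q %| N)%N ->
     forall j k, j != k -> coprimep (redp q (g j)) (redp q (g k)))
  (* the fixed g = g_i, l = l_i, and the g-expansion of f *)
  (i : 'I_m) (a : seq {poly int})
  (Ha : is_expansion f (g i) a)
  (HvN : forall k j, vN_defined N (a`_k)`_j)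
  (* p-adic data: (Om, v, Zp) models (\bar Q_p, v_p, Z_p) *)
  (p : nat) (Hp : prime p) (HpN : (p %| N)%N)
  (Om : closedFieldType) (v : Om -> rat) (Zp : Om -> Prop)
  (HOm : padic_closure p v Zp)
  (* phi : monic irreducible factor of g in Z_p[x] *)
  (phi : {poly Om}) (Hphi_monic : phi \is monic)
  (Hphi_irr : irreducible_Zpx Zp phi)
  (Hphi_dvd : exists2 h, in_Zpx Zp h & toOm Om (g i) = phi * h)
  (* the phi-expansion of f in Z_p[x] *)
  (b : seq {poly Om}) (Hb_Zp : forall k, in_Zpx Zp b`_k)
  (Hb : is_expansion (toOm Om f) phi b) :
  (* (1) both N^-_phi(f) and N^-_g(f) have length l_i *)
  (negpart_length (pts_of (size b) (uP v b)) (l i)%:R /\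
   negpart_length (pts_of (size a) (uN N a)) (l i)%:R) /\
  (* (2) for every slope -lambda of N^-_phi(f) and every root alpha of f in
     \bar Q_p (alpha = iota_P(theta)) with v_p(phi(alpha)) = lambda,
     v_p(g(alpha)) = lambda, i.e. v_P(g(theta)) = e(P/p) lambda *)
  (forall lambda : rat, 0 < lambda ->
     is_slope (pts_of (size b) (uP v b)) (- lambda) ->
     forall alpha : Om, root (toOm Om f) alpha ->
       phi.[alpha] != 0 -> v phi.[alpha] = lambda ->
       (toOm Om (g i)).[alpha] != 0 /\ v (toOm Om (g i)).[alpha] = lambda).
Proof.
set Hint := \prod_(j < m | j != i) g j ^+ l j.
have eprod : \prod_(j < m) g j ^+ l j = g i ^+ l i * Hint by rewrite (bigD1 i).
have hd : forall k, (N%:Z %| (f - g i ^+ l i * Hint)`_k)%Z by move=> k; rewrite -eprod.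
have [mgi sgi] := Hg i.
have copH : coprimep (redp p (g i)) (redp p Hint).
  rewrite /redp /Hint rmorph_prod.
  apply: (big_rec (fun P => coprimep _ P)); first exact: coprimep1.
  move=> j P hj hP; rewrite coprimepMr hP andbT rmorphXn; apply: coprimep_expr.
  by apply: Hcop => //; rewrite eq_sym.
have NF : (N%:R : 'F_p) = 0.
  by case/dvdnP: HpN => q ->; rewrite natrM pchar_Fp_0 // mulr0.
have eF : redp p f = redp p (g i) ^+ l i * redp p Hint.
  by rewrite /redp (map_eq_R NF hd) rmorphM rmorphXn.
case: Hphi_dvd => hh Zh ghh.
have Zphi : in_Zpx Zp phi by case: Hphi_irr.
have sphi : (1 < size phi)%N.
  case: Hphi_irr => _ [hn [nz _]]; move: nz; rewrite -size_poly_gt0.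
  case e: (size phi) => [|[|s]] // _; case: hn; split => //.
  have -> : phi`_0 = 1 by rewrite -(eqP Hphi_monic) lead_coefE e.
  by rewrite invr1; case: HOm => _ [[]].
have eg : redp p (g i) = resp p v phi * resp p v hh.
  by rewrite -(resp_toOm Hp HOm) ghh (resp_mul Hp HOm Zphi Zh).
have cph : coprimep (resp p v phi) (resp p v hh).
  by apply: sqf_cop; rewrite -eg; apply: Hsqf.
have cpH : coprimep (resp p v phi) (redp p Hint).
  by move: copH; rewrite eg coprimepMl => /andP[].
split; first split.
- apply: (phi_side Hp HOm (F := f) (phi := phi) (b := b) (Hq := resp p v hh ^+ l i * redp p Hint) Hphi_monic Zphi sphi Hb_Zp Hb).
  + by rewrite eF eg exprMn mulrA.
  + by rewrite coprimepMr cpH andbT; apply: coprimep_expr.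
- exact: (N_side Hp HpN HN mgi sgi Ha hd copH).
- move=> lambda hl _ alpha r nphi vphi.
  have hv : 0 < v phi.[alpha] by rewrite vphi.
  have [nh vh] := part2 Hp HOm Hf_monic Zphi Zh cph r nphi hv.
  rewrite ghh hornerM; split; first by rewrite mulf_neq0.
  by case: HOm => -[vM _ _ _ _] _; rewrite vM // vh vphi addr0.
Qed.
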